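(* Let $\dot{\mathbf{x}}=\mathbf{F}(\mathbf{x})$ have a stable limit cycle $\mathcal{A}$ with angular frequency $\Omega>0$ and basin $\mathcal{B}(\mathcal{A})$, whose Floquet characteristic multipliers $\mu_1,\dots,\mu_{n-1}$ are distinct with $|\mu_{n-1}|\le\cdots\le|\mu_1|<1$, and characteristic exponents $\nu_j$ ($\mu_j=e^{2\pi\nu_j/\Omega}$, $\mathrm{Re}[\nu_j]<0$). Let $L_\mathcal{B}$ be the generator of the Koopman semigroup $\{U^t_\mathcal{B}\}_{t\ge0}$ restricted to $\mathcal{B}(\mathcal{A})$, acting on the averaging kernel Hilbert space $\mathcal{S}_{\mathbf{z},\theta}$. Then for every $s\in\mathbb{C}$ with $\mathrm{Re}[s]>0$ and every $f\in\mathcal{S}_{\mathbf{z},\theta}$, $$R(s;L_\mathcal{B})f=\sum_{\substack{k_1,\dots,k_{n-1}\in\mathbb{N}_0\\ m\in\mathbb{Z}}}\frac{P_{k_1\cdots k_{n-1},m}f}{s-\{(k_1\nu_1+\cdots+k_{n-1}\nu_{n-1})+\mathrm{i}m\Omega\}},$$ the series converging in $\mathcal{S}_{\mathbf{z},\theta}$; the region of convergence of $R(s;L_\mathcal{B})$ is $\{s\in\mathbb{C}:\mathrm{Re}[s]>0\}$.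
   Context: Koopman operators $U^tf=f\circ\mathbf{S}^t$, generator $Lf=\lim_{t\downarrow0}(U^tf-f)/t$, Koopman resolvent $R(s;L)=(sI-L)^{-1}$, given for strongly continuous semigroups by $\int_0^\infty e^{-st}U^tf\,\mathrm{d}t$. In $\mathcal{B}(\mathcal{A})$ the dynamics are conjugate to $\dot{\mathbf{y}}=\mathbf{A}(\theta)\mathbf{y}$, $\dot\theta=\Omega$, with $\mathbf{y}\in\mathbb{R}^{n-1}$, $\theta\in\mathbb{T}$, $\mathbf{A}$ $2\pi$-periodic; with Floquet matrix $\mathbf{P}(\theta)$, Floquet stability matrix $\mathbf{B}$ (eigenvalues $\mu_j$) diagonalized by $\mathbf{V}$, set $\mathbf{z}(\mathbf{y},\theta)=\mathbf{V}^{-1}\mathbf{P}(\theta)^{-1}\mathbf{y}$. Then $\phi_{k_1\cdots k_{n-1},m}=z_1^{k_1}\cdots z_{n-1}^{k_{n-1}}e^{\mathrm{i}m\theta}$ is a Koopman eigenfunction with eigenvalue $k_1\nu_1+\cdots+k_{n-1}\nu_{n-1}+\mathrm{i}m\Omega$. The space $\mathcal{S}_{\mathbf{z},\theta}$ consists of functions analytic (entire) in $\mathbf{z}\in\mathbb{C}^{n-1}$ and $\mathscr{L}^2$ in $\theta\in\mathbb{T}$, expanded as $f=\sum_{k,m}\phi_{k_1\cdots k_{n-1},m}V_{k_1\cdots k_{n-1},m}$ with $\|f\|^2=\sum_{k,m}|V_{k_1\cdots k_{n-1},m}|^2k_1!\cdots k_{n-1}!$; projections $P_{k_1\cdots k_{n-1},m}f=\phi_{k_1\cdots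 k_{n-1},m}V_{k_1\cdots k_{n-1},m}$ (orthogonal). The semigroup acts as $U^t_\mathcal{B}f=\sum_{k,m}\phi_{k,m}V_{k,m}e^{(k_1\nu_1+\cdots+k_{n-1}\nu_{n-1}+\mathrm{i}m\Omega)t}$ and is strongly continuous. *)

(* Defs.v *)
From Stdlib Require Import Reals List ZArith.
From Coquelicot Require Import Coquelicot.
Open Scope R_scope.

Definition cexp (z : C) : C := (exp (Re z) * cos (Im z), exp (Re z) * sin (Im z)).

(** Index (k_1,...,k_{n-1}; m): a list of naturals k (meant to have length n-1)
    and an integer m. *)
Definition idx : Type := (list nat * Z)%type.
Definition idx_eq_dec (i j : idx) : {i = j} + {i <> j}.
Proof. decide equality; [apply Z.eq_dec | apply (list_eq_dec Nat.eq_dec)]. Defined.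

Definition valid_idx (n : nat) (i : idx) : Prop := length (fst i) = (n - 1)%nat.

Fixpoint kweight (k : list nat) : nat :=
  match k with nil => 1%nat | a :: k' => (fact a * kweight k')%nat end.

(** k_1 nu_1 + ... + k_{n-1} nu_{n-1}; nu_{j+1} is [nu j] (0-based). *)
Fixpoint ksum (nu : nat -> C) (k : list nat) (j : nat) : C :=
  match k with
  | nil => RtoC 0
  | a :: k' => Cplus (Cmult (RtoC (INR a)) (nu j)) (ksum nu k' (S j))
  end.

Definition eigval (nu : nat -> C) (Om : R) (i : idx) : C :=
  Cplus (ksum nu (fst i) 0) (0, IZR (snd i) * Om).

Definition mu (Om : R) (nu : nat -> C) (j : nat) : C :=
  cexp (Cmult (nu j) (RtoC (2 * PI / Om))).

(** Elements of S_{z,theta} are represented by their expansion coefficients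
    V_{k,m} w.r.t. the eigenfunctions phi_{k,m}:  f = sum phi_{k,m} V_{k,m}. *)
Definition coef : Type := idx -> C.

Fixpoint lsum (F : list idx) (a : idx -> R) : R :=
  match F with nil => 0 | i :: F' => a i + lsum F' a end.

Definition wsq (V : coef) (i : idx) : R := INR (kweight (fst i)) * (Cmod (V i))^2.

(** ||V||^2 <= eps  (norm^2 = sum |V_{k,m}|^2 k_1!...k_{n-1}!) *)
Definition small (V : coef) (eps : R) : Prop :=
  forall F : list idx, NoDup F -> lsum F (wsq V) <= eps.

Definition in_S (n : nat) (V : coef) : Prop :=
  (forall i, ~ valid_idx n i -> V i = RtoC 0) /\ exists B, small V B.

Definition csub (V W : coef) : coef := fun i => Cminus (V i) (W i).

(** Projection P_{k,m} f = phi_{k,m} V_{k,m} *)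
Definition proj (i : idx) (f : coef) : coef :=
  fun j => if idx_eq_dec j i then f i else RtoC 0.

Fixpoint fsum (F : list idx) (x : idx -> coef) : coef :=
  match F with
  | nil => fun _ => RtoC 0
  | i :: F' => fun j => Cplus (x i j) (fsum F' x j)
  end.

(** Unconditional convergence in S of the series sum_i x_i to g
    (net of finite index sets). *)
Definition series_conv (x : idx -> coef) (g : coef) : Prop :=
  forall eps, 0 < eps -> exists F0 : list idx,
    forall F, NoDup F -> incl F0 F -> small (csub g (fsum F x)) eps.

Definition Ut (nu : nat -> C) (Om : R) (t : R) (f : coef) : coef :=
  fun i => Cmult (f i) (cexp (Cmult (eigval nu Om i) (RtoC t))).

(** Generator: L f = lim_{t -> 0+} (U^t f - f)/t in the norm of S;
    [gen n nu Om f Lf] means f in dom(L) and L f = Lf. *)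
Definition gen (n : nat) (nu : nat -> C) (Om : R) (f Lf : coef) : Prop :=
  in_S n f /\ in_S n Lf /\
  forall eps, 0 < eps -> exists delta, 0 < delta /\
    forall t, 0 < t < delta ->
      small (fun i => Cminus (Cmult (Cminus (Ut nu Om t f i) (f i)) (RtoC (/ t))) (Lf i)) eps.

Definition resolvent_value (n : nat) (nu : nat -> C) (Om : R) (s : C) (f g : coef) : Prop :=
  (exists Lg, gen n nu Om g Lg /\ forall i, Cminus (Cmult s (g i)) (Lg i) = f i) /\
  (forall h Lh, gen n nu Om h Lh ->
     (forall i, Cminus (Cmult s (h i)) (Lh i) = f i) -> h = g).

(** Truncated Laplace integral int_0^T e^{-st} U^t f dt, computed coordinatewise
    (each coordinate functional is continuous, so this is the S-valued integral). *)
Definition laplaceT (nu : nat -> C) (Om : R) (s : C) (f : coef) (T : R) : coef :=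
  fun i =>
    let h := fun t => Cmult (cexp (Copp (Cmult s (RtoC t)))) (Ut nu Om t f i) in
    (RInt (fun t => Re (h t)) 0 T, RInt (fun t => Im (h t)) 0 T).

Definition laplace_converges (n : nat) (nu : nat -> C) (Om : R) (s : C) (f : coef) : Prop :=
  exists g, in_S n g /\
    forall eps, 0 < eps -> exists T0, forall T, T0 <= T ->
      small (csub (laplaceT nu Om s f T) g) eps.

(* Main.v *)
Require Import Defs.
From Stdlib Require Import Reals List ZArith Lra Lia Classical FunctionalExtensionality.
From Coquelicot Require Import Coquelicot.
Open Scope R_scope.

Lemma lsum_app (F G : list idx) a : lsum (F ++ G) a = lsum F a + lsum G a.
Proof. induction F; simpl; [ring | rewrite IHF; ring]. Qed.

Lemma lsum_le (F : list idx) a b : (forall x, In x F -> a x <= b x) -> lsum F a <= lsum F b.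
Proof. induction F; simpl; intros H; [lra|].
  assert (a a0 <= b a0) by auto. assert (lsum F a <= lsum F b) by auto. lra. Qed.

Lemma lsum_scal (F : list idx) a c : lsum F (fun x => c * a x) = c * lsum F a.
Proof. induction F; simpl; [ring | rewrite IHF; ring]. Qed.

Lemma lsum_nonneg (F : list idx) a : (forall x, 0 <= a x) -> 0 <= lsum F a.
Proof. induction F; simpl; intros H; [lra|]. pose proof (H a0). specialize (IHF H). lra. Qed.

Definition inb (F0 : list idx) (x : idx) : bool :=
  if in_dec idx_eq_dec x F0 then true else false.

Lemma lsum_split (G : list idx) (P : idx -> bool) a b c :
  (forall x, In x G -> P x = true -> a x <= c) ->
  (forall x, In x G -> P x = false -> a x <= b x) ->
  lsum G a <= c * INR (length (filter P G)) + lsum (filter (fun x => negb (P x)) G) b.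
Proof.
  induction G; simpl; intros H1 H2; [lra|].
  assert (IH := IHG (fun x h => H1 x (or_intror h)) (fun x h => H2 x (or_intror h))).
  destruct (P a0) eqn:E; cbn [filter length lsum negb].
  - assert (a a0 <= c) by auto. rewrite S_INR. lra.
  - assert (a a0 <= b a0) by auto. lra.
Qed.

Lemma wsq_nonneg V i : 0 <= wsq V i.
Proof. unfold wsq. apply Rmult_le_pos; [apply pos_INR | apply pow2_ge_0]. Qed.

Lemma small_nonneg V B : small V B -> 0 <= B.
Proof. intros H. specialize (H nil (NoDup_nil _)). simpl in H. lra. Qed.

Lemma small_le V W K B : 0 <= K -> (forall i, wsq V i <= K * wsq W i) -> small W B -> small V (K * B).
Proof. intros HK H HW F ND. eapply Rle_trans. apply lsum_le. intros; apply H.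
  rewrite lsum_scal. apply Rmult_le_compat_l; auto. Qed.

Lemma tail_lemma a : (forall x, 0 <= a x) -> (exists B, forall F, NoDup F -> lsum F a <= B) ->
  forall eps, 0 < eps -> exists F0, NoDup F0 /\
    forall G, NoDup G -> (forall x, In x G -> ~ In x F0) -> lsum G a <= eps.
Proof.
  intros Ha [B HB] eps Heps.
  set (E := fun r => exists F, NoDup F /\ r = lsum F a).
  assert (Hb : bound E). { exists B. intros r [F [ND ->]]. auto. }
  assert (Hne : exists r, E r). { exists 0. exists nil. split; [constructor | reflexivity]. }
  destruct (completeness E Hb Hne) as [S [HS1 HS2]].
  destruct (classic (exists F0, NoDup F0 /\ S - eps < lsum F0 a)) as [[F0 [ND H]] | Hn].
  - exists F0. split; auto. intros G NDG Hd.
    assert (E (lsum (G ++ F0) a)). { exists (G ++ F0). split; auto. apply NoDup_app; auto. }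
    apply HS1 in H0. rewrite lsum_app in H0. lra.
  - exfalso. assert (S <= S - eps). { apply HS2. intros r [F [ND ->]].
      destruct (Rle_lt_dec (lsum F a) (S - eps)); auto. exfalso; apply Hn; eauto. }
    lra.
Qed.

Lemma filter_len_le (G F0 : list idx) : NoDup G ->
  (length (filter (inb F0) G) <= length F0)%nat.
Proof. intros ND. apply NoDup_incl_length. apply NoDup_filter; auto.
  intros x Hx. apply filter_In in Hx. destruct Hx as [_ H]. unfold inb in H.
  destruct (in_dec idx_eq_dec x F0); auto; discriminate. Qed.

Lemma split_bound (G F0 : list idx) a b c eps2 : NoDup G -> 0 <= c ->
  (forall x, In x F0 -> a x <= c) -> (forall x, ~ In x F0 -> a x <= b x) ->
  (forall G, NoDup G -> (forall x, In x G -> ~ In x F0) -> lsum G b <= eps2) ->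
  lsum G a <= c * INR (length F0) + eps2.
Proof.
  intros ND Hc H1 H2 Ht.
  eapply Rle_trans. apply (lsum_split G (inb F0) a b c).
  - intros x _ Hx. apply H1. unfold inb in Hx. destruct (in_dec idx_eq_dec x F0); auto; discriminate.
  - intros x _ Hx. apply H2. unfold inb in Hx. destruct (in_dec idx_eq_dec x F0); auto; discriminate.
  - apply Rplus_le_compat.
    + apply Rmult_le_compat_l; auto. apply le_INR. apply filter_len_le; auto.
    + apply Ht. apply NoDup_filter; auto.
      intros x Hx. apply filter_In in Hx. destruct Hx as [_ Hx]. unfold inb in Hx.
      destruct (in_dec idx_eq_dec x F0); auto; discriminate.
Qed.

Ltac ceq := apply injective_projections; unfold Cplus, Cmult, Cminus, Copp, RtoC, Re, Im; simpl; ring.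

Lemma cexp_add u v : cexp (Cplus u v) = Cmult (cexp u) (cexp v).
Proof. unfold cexp, Cplus, Cmult, Re, Im; simpl. rewrite exp_plus, cos_plus, sin_plus.
  apply injective_projections; simpl; ring. Qed.

Lemma Cmod_cexp z : Cmod (cexp z) = exp (Re z).
Proof. destruct z as [a b]. unfold Cmod, cexp, Re, Im; simpl fst; simpl snd.
  replace ((exp a * cos b) ^ 2 + (exp a * sin b) ^ 2) with ((exp a)^2 * ((sin b)² + (cos b)²)) by (unfold Rsqr; ring).
  rewrite sin2_cos2, Rmult_1_r. apply sqrt_pow2. left; apply exp_pos. Qed.

Lemma sin_sq_le x : (sin x)² <= x².
Proof.
  assert (H : forall y, 0 < y -> (sin y)² <= y²).
  { intros y Hy. pose proof (sin_lt_x y Hy).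
    assert (-y <= sin y). { destruct (Rle_lt_dec 1 y). pose proof (SIN_bound y). lra.
      assert (0 <= sin y). apply sin_ge_0; pose proof PI2_1; lra. lra. }
    unfold Rsqr; nra. }
  destruct (Rtotal_order x 0) as [Hx|[Hx|Hx]].
  - pose proof (H (-x) ltac:(lra)). rewrite sin_neg, <- !Rsqr_neg in H0. exact H0.
  - subst. rewrite sin_0. lra.
  - auto.
Qed.

Lemma one_minus_cos b : 1 - cos b <= b² / 2.
Proof. replace b with (2 * (b/2)) at 1 by field. rewrite cos_2a_sin.
  pose proof (sin_sq_le (b/2)). unfold Rsqr in *. nra. Qed.

Lemma cexp_m1_bound z : Re z <= 0 -> Cmod (Cminus (cexp z) (RtoC 1)) <= Cmod z.
Proof.
  intros Hz. destruct z as [a b]. unfold Re in Hz; simpl in Hz.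
  unfold Cmod, cexp, Cminus, Cplus, Copp, RtoC; simpl. apply sqrt_le_1_alt.
  pose proof (exp_ineq1_le a). 
  assert (exp a <= 1) by (destruct (Req_dec a 0); [subst; rewrite exp_0; lra | left; rewrite <- exp_0; apply exp_increasing; lra]).
  pose proof (exp_pos a). pose proof (one_minus_cos b). pose proof (sin2_cos2 b). unfold Rsqr in *.
  nra.
Qed.


Lemma Cmod_le_sum (x : C) : Cmod x <= Rabs (fst x) + Rabs (snd x).
Proof. destruct x as [u v]; unfold Cmod; simpl.
  rewrite <- (sqrt_Rsqr (Rabs u + Rabs v)) by (pose proof (Rabs_pos u); pose proof (Rabs_pos v); lra).
  apply sqrt_le_1_alt. unfold Rsqr. pose proof (Rabs_pos u); pose proof (Rabs_pos v).
  unfold Rabs in *; destruct (Rcase_abs u), (Rcase_abs v); nra. Qed.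

Lemma Cmult_RtoC (a b t : R) : Cmult (a, b) (RtoC t) = (a * t, b * t).
Proof. ceq. Qed.

Lemma deriv_lim (f : R -> R) l eps : is_derive f 0 l -> 0 < eps ->
  exists delta, 0 < delta /\ forall t, 0 < t < delta -> Rabs ((f t - f 0) / t - l) < eps.
Proof. intros H He. apply is_derive_Reals in H. destruct (H eps He) as [d Hd].
  exists d. split. apply cond_pos. intros t Ht. specialize (Hd t ltac:(lra)).
  rewrite Rplus_0_l in Hd. apply Hd. rewrite Rabs_pos_eq; lra. Qed.

Lemma q_lim (l : C) eps : 0 < eps -> exists delta, 0 < delta /\ forall t, 0 < t < delta ->
  Cmod (Cminus (Cmult (Cminus (cexp (Cmult l (RtoC t))) (RtoC 1)) (RtoC (/ t))) l) < eps.
Proof.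
  intros He. destruct l as [a b].
  assert (H1 : is_derive (fun t => exp (a * t) * cos (b * t)) 0 a).
  { auto_derive; auto. rewrite !Rmult_0_r, exp_0, cos_0, sin_0. ring. }
  assert (H2 : is_derive (fun t => exp (a * t) * sin (b * t)) 0 b).
  { auto_derive; auto. rewrite !Rmult_0_r, exp_0, cos_0, sin_0. ring. }
  destruct (deriv_lim _ _ (eps/2) H1 ltac:(lra)) as [d1 [Hd1 D1]].
  destruct (deriv_lim _ _ (eps/2) H2 ltac:(lra)) as [d2 [Hd2 D2]].
  exists (Rmin d1 d2). split. apply Rmin_glb_lt; auto.
  intros t Ht. assert (t < d1) by (pose proof (Rmin_l d1 d2); lra).
  assert (t < d2) by (pose proof (Rmin_r d1 d2); lra).
  specialize (D1 t ltac:(lra)). specialize (D2 t ltac:(lra)).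
  rewrite !Rmult_0_r, exp_0, cos_0 in D1. rewrite !Rmult_0_r, exp_0, sin_0 in D2.
  eapply Rle_lt_trans. apply Cmod_le_sum.
  rewrite Cmult_RtoC. unfold cexp, Cminus, Cplus, Copp, Cmult, RtoC, Re, Im; simpl.
  replace ((exp (a * t) * cos (b * t) + - (1)) * / t - (exp (a * t) * sin (b * t) + - 0) * 0 + - a)
    with ((exp (a * t) * cos (b * t) - 1 * 1) / t - a) by (unfold Rdiv; ring).
  replace ((exp (a * t) * cos (b * t) + - (1)) * 0 + (exp (a * t) * sin (b * t) + - 0) * / t + - b)
    with ((exp (a * t) * sin (b * t) - 1 * 0) / t - b) by (unfold Rdiv; ring).
  lra.
Qed.

Lemma Re_ksum (nu : nat -> C) k j : (forall p, (j <= p < j + length k)%nat -> Re (nu p) <= 0) ->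
  Re (ksum nu k j) <= 0.
Proof.
  revert j; induction k as [|a k IH]; intros j H; simpl; [unfold Re; simpl; lra|].
  unfold Re, Cplus, Cmult, RtoC in *; simpl.
  assert (Re (nu j) <= 0) by (apply H; simpl; lia).
  assert (fst (ksum nu k (S j)) <= 0) by (apply IH; intros p Hp; apply H; simpl; lia).
  unfold Re in H0. pose proof (pos_INR a). nra.
Qed.

Lemma Re_eigval n Om (nu : nat -> C) i : (forall j, (j < n - 1)%nat -> Re (nu j) < 0) ->
  valid_idx n i -> Re (eigval nu Om i) <= 0.
Proof. intros Hnu Hv. unfold eigval. unfold valid_idx in Hv.
  assert (Re (ksum nu (fst i) 0) <= 0). { apply Re_ksum. intros p Hp. rewrite Hv in Hp. left; apply Hnu; lia. }
  unfold Re, Cplus in *; simpl. lra. Qed.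

Lemma wsq_bound V W i K : 0 <= K -> Cmod (V i) <= K * Cmod (W i) -> wsq V i <= K^2 * wsq W i.
Proof. intros HK H. unfold wsq. pose proof (pos_INR (kweight (fst i))). pose proof (Cmod_ge_0 (V i)).
  assert (Cmod (V i) ^2 <= (K * Cmod (W i))^2) by (apply pow_incr; lra).
  replace (K ^ 2 * (INR (kweight (fst i)) * Cmod (W i) ^ 2)) with (INR (kweight (fst i)) * (K * Cmod (W i)) ^ 2) by ring.
  apply Rmult_le_compat_l; auto. Qed.

Lemma sub_lower (s l : C) : 0 < Re s -> Re l <= 0 -> Re s <= Cmod (Cminus s l).
Proof. intros H1 H2. eapply Rle_trans; [|apply re_le_Cmod].
  unfold Re, Cminus, Cplus, Copp in *; simpl. rewrite Rabs_pos_eq; lra. Qed.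

Lemma Cmod_mult_inv_le (x d : C) (c : R) : 0 < c -> c <= Cmod d ->
  Cmod (Cmult x (Cinv d)) <= / c * Cmod x.
Proof. intros Hc Hd. assert (d <> RtoC 0). { intro E; subst. rewrite Cmod_0 in Hd. lra. }
  rewrite Cmod_mult, Cmod_inv by auto. rewrite Rmult_comm. apply Rmult_le_compat_r. apply Cmod_ge_0.
  apply Rinv_le_contravar; auto. Qed.

Lemma small_single V eps i : small V eps -> wsq V i <= eps.
Proof. intros H. specialize (H (i :: nil) (NoDup_cons _ (fun h : In i nil => h) (NoDup_nil _))).
  simpl in H. lra. Qed.

Lemma kweight_ge1 k : (1 <= kweight k)%nat.
Proof. induction k; simpl; auto. pose proof (lt_O_fact a). nia. Qed.

Lemma finite_delta (F0 : list idx) (P : idx -> R -> Prop) :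
  (forall i, In i F0 -> exists d, 0 < d /\ forall t, 0 < t < d -> P i t) ->
  exists d, 0 < d /\ forall i t, In i F0 -> 0 < t < d -> P i t.
Proof.
  induction F0 as [|a F IH]; intros H.
  - exists 1. split; [lra|]. intros i t [].
  - destruct (H a (or_introl eq_refl)) as [d1 [Hd1 P1]].
    destruct (IH (fun i h => H i (or_intror h))) as [d2 [Hd2 P2]].
    exists (Rmin d1 d2). split. apply Rmin_glb_lt; auto.
    intros i t [<-|Hi] Ht.
    + apply P1. pose proof (Rmin_l d1 d2); lra.
    + apply P2; auto. pose proof (Rmin_r d1 d2); lra.
Qed.

Definition q (l : C) (t : R) : C := Cmult (Cminus (cexp (Cmult l (RtoC t))) (RtoC 1)) (RtoC (/ t)).

Lemma q_bound l t : 0 < t -> Re l <= 0 -> Cmod (q l t) <= Cmod l.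
Proof. intros Ht Hl. unfold q. rewrite Cmod_mult, Cmod_R, Rabs_pos_eq by (left; apply Rinv_0_lt_compat; auto).
  assert (Cmod (Cminus (cexp (Cmult l (RtoC t))) (RtoC 1)) <= Cmod l * t).
  { replace (Cmod l * t) with (Cmod (Cmult l (RtoC t))) by (rewrite Cmod_mult, Cmod_R, Rabs_pos_eq; lra).
    apply cexp_m1_bound. rewrite re_scal_r. nra. }
  apply (Rmult_le_compat_r (/ t)) in H; [| left; apply Rinv_0_lt_compat; auto].
  replace (Cmod l * t * / t) with (Cmod l) in H by (field; lra). auto. Qed.

Lemma q_diff_bound l t : 0 < t -> Re l <= 0 -> Cmod (Cminus (q l t) l) <= 2 * Cmod l.
Proof. intros. unfold Cminus. eapply Rle_trans. apply Cmod_triangle. rewrite Cmod_opp.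
  pose proof (q_bound l t H H0). lra. Qed.

Lemma D_eq (g L l : C) t : L = Cmult l g ->
  Cminus (Cmult (Cminus (Cmult g (cexp (Cmult l (RtoC t)))) g) (RtoC (/ t))) L = Cmult g (Cminus (q l t) l).
Proof. intros ->. unfold q. set (e := cexp _). ceq. Qed.

Definition gres (nu : nat -> C) (Om : R) (s : C) (f : coef) : coef :=
  fun i => Cmult (f i) (Cinv (Cminus s (eigval nu Om i))).

Section P1.
Variables (n : nat) (Om : R) (nu : nat -> C) (s : C) (f : coef).
Hypothesis Hnu : forall j, (j < n - 1)%nat -> Re (nu j) < 0.
Hypothesis Hs : 0 < Re s.
Hypothesis Hf : in_S n f.

Lemma invalid_zero i : ~ valid_idx n i -> f i = RtoC 0 /\ gres nu Om s f i = RtoC 0.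
Proof. intros Hv. destruct Hf as [H0 _]. rewrite (H0 i Hv). split; auto. unfold gres. rewrite H0 by auto.
  apply Cmult_0_l. Qed.

Lemma g_bound i : Cmod (gres nu Om s f i) <= / Re s * Cmod (f i).
Proof. destruct (classic (valid_idx n i)) as [Hv|Hv].
  - apply Cmod_mult_inv_le; auto. apply sub_lower; auto. eapply Re_eigval; eauto.
  - destruct (invalid_zero i Hv) as [E1 E2]. rewrite E1, E2, Cmod_0. lra. Qed.

Lemma Lg_bound i : Cmod (Cmult (eigval nu Om i) (gres nu Om s f i)) <= (Cmod s / Re s + 1) * Cmod (f i).
Proof. destruct (classic (valid_idx n i)) as [Hv|Hv].
  - set (l := eigval nu Om i). set (d := Cminus s l).
    assert (Hd : Re s <= Cmod d) by (apply sub_lower; auto; eapply Re_eigval; eauto).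
    assert (Hl : Cmod l <= Cmod s + Cmod d).
    { replace l with (Cplus s (Copp d)) by (unfold d; ceq). eapply Rle_trans. apply Cmod_triangle. rewrite Cmod_opp; lra. }
    assert (dnz : d <> RtoC 0). { intro E. rewrite E, Cmod_0 in Hd. lra. }
    unfold gres. fold l. fold d. rewrite !Cmod_mult, Cmod_inv by auto.
    pose proof (Cmod_ge_0 (f i)). pose proof (Cmod_ge_0 s). pose proof (Cmod_ge_0 l).
    assert (HD : 0 < Cmod d) by lra.
    assert (Cmod l * (Cmod (f i) * / Cmod d) <= (Cmod s * / Cmod d + 1) * Cmod (f i)).
    { replace ((Cmod s * / Cmod d + 1) * Cmod (f i)) with ((Cmod s + Cmod d) * (Cmod (f i) * / Cmod d)) by (field; lra).
      apply Rmult_le_compat_r; auto. apply Rmult_le_pos; auto. left; apply Rinv_0_lt_compat; auto. }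
    eapply Rle_trans; eauto. apply Rmult_le_compat_r; auto. unfold Rdiv.
    apply Rplus_le_compat_r. apply Rmult_le_compat_l; auto. apply Rinv_le_contravar; auto.
  - destruct (invalid_zero i Hv) as [E1 E2]. rewrite E1, E2, Cmult_0_r, Cmod_0. lra. Qed.

Lemma g_in_S : in_S n (gres nu Om s f).
Proof. split. intros i Hv. apply (invalid_zero i Hv).
  destruct Hf as [_ [B HB]]. exists ((/ Re s)^2 * B). apply (small_le _ f). apply pow2_ge_0.
  intros i. apply wsq_bound. left; apply Rinv_0_lt_compat; auto. apply g_bound. auto. Qed.

Definition Lg : coef := fun i => Cmult (eigval nu Om i) (gres nu Om s f i).

Lemma Lg_in_S : in_S n Lg.
Proof. split. intros i Hv. unfold Lg. rewrite (proj2 (invalid_zero i Hv)). apply Cmult_0_r.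
  destruct Hf as [_ [B HB]]. exists ((Cmod s / Re s + 1)^2 * B). apply (small_le _ f). apply pow2_ge_0.
  intros i. apply wsq_bound. pose proof (Cmod_ge_0 s). assert (0 <= Cmod s / Re s) by (apply Rmult_le_pos; auto; left; apply Rinv_0_lt_compat; auto). lra.
  apply Lg_bound. auto. Qed.
End P1.

Section P2.
Variables (n : nat) (Om : R) (nu : nat -> C) (s : C) (f : coef).
Hypothesis Hnu : forall j, (j < n - 1)%nat -> Re (nu j) < 0.
Hypothesis Hs : 0 < Re s.
Hypothesis Hf : in_S n f.

Let g := gres nu Om s f.
Let L := Lg Om nu s f.

Lemma gen_g : gen n nu Om g L.
Proof.
  split. apply g_in_S; auto. split. apply Lg_in_S; auto.
  intros eps He.
  destruct (Lg_in_S n Om nu s f Hnu Hs Hf) as [_ [BL HBL]].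
  destruct (tail_lemma (wsq L) (wsq_nonneg L) ltac:(exists BL; auto) (eps/8) ltac:(lra)) as [F0 [ND0 HT]].
  set (N := INR (length F0)). assert (HN : 0 <= N) by apply pos_INR.
  set (e1 := eps / (2 * (N + 1))). assert (He1 : 0 < e1) by (unfold e1; apply Rdiv_lt_0_compat; lra).
  destruct (finite_delta F0 (fun i t => wsq (fun j => Cminus (Cmult (Cminus (Ut nu Om t g j) (g j)) (RtoC (/ t))) (L j)) i <= e1)) as [d [Hd Hdel]].
  { intros i _. set (A := INR (kweight (fst i)) * Cmod (g i) ^ 2).
    assert (HA : 0 <= A) by (apply Rmult_le_pos; [apply pos_INR | apply pow2_ge_0]).
    set (eta := Rmin 1 (e1 / (A + 1))).
    assert (Heta : 0 < eta) by (apply Rmin_glb_lt; [lra | apply Rdiv_lt_0_compat; lra]).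
    destruct (q_lim (eigval nu Om i) eta Heta) as [d [Hd Hq]].
    exists d. split; auto. intros t Ht. specialize (Hq t Ht).
    unfold wsq, Ut; cbv beta. rewrite (D_eq (g i) (L i) (eigval nu Om i) t) by reflexivity.
    rewrite Cmod_mult. fold q in Hq.
    assert (eta <= 1) by apply Rmin_l. assert (eta <= e1 / (A+1)) by apply Rmin_r.
    assert (A * eta <= e1). { apply (Rmult_le_compat_l A) in H0; auto. eapply Rle_trans; eauto.
      replace (A * (e1 / (A + 1))) with (e1 * (A / (A+1))) by (field; lra).
      rewrite <- (Rmult_1_r e1) at 2. apply Rmult_le_compat_l; [lra|].
      apply Rmult_le_reg_r with (A+1); [lra|]. unfold Rdiv; rewrite Rmult_assoc, Rinv_l; lra. }
    pose proof (Cmod_ge_0 (Cminus (q (eigval nu Om i) t) (eigval nu Om i))).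
    replace (INR (kweight (fst i)) * (Cmod (g i) * Cmod (Cminus (q (eigval nu Om i) t) (eigval nu Om i))) ^ 2)
      with (A * Cmod (Cminus (q (eigval nu Om i) t) (eigval nu Om i)) ^ 2) by (unfold A; ring).
    assert (Cmod (Cminus (q (eigval nu Om i) t) (eigval nu Om i)) ^ 2 <= eta).
    { simpl. rewrite Rmult_1_r. pose proof (Cmod_ge_0 (Cminus (q (eigval nu Om i) t) (eigval nu Om i))).
      set (c := Cmod (Cminus (q (eigval nu Om i) t) (eigval nu Om i))) in *.
      assert (Hq' : c < eta) by exact Hq. assert (c <= 1) by lra. nra. }
    nra. }
  exists d. split; auto. intros t Ht G NDG.
  eapply Rle_trans. apply (split_bound G F0 _ (fun i => 4 * wsq L i) e1 (eps/2)).
  - exact NDG.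
  - lra.
  - intros x Hx. apply Hdel; auto.
  - intros x _. replace (4 * wsq L x) with (2^2 * wsq L x) by ring.
    apply wsq_bound; [lra|]. unfold Ut. rewrite (D_eq (g x) (L x) (eigval nu Om x) t) by reflexivity.
    unfold L, Lg. fold g. rewrite !Cmod_mult.
    destruct (classic (valid_idx n x)) as [Hv|Hv].
    + pose proof (q_diff_bound (eigval nu Om x) t ltac:(lra) (Re_eigval n Om nu x Hnu Hv)).
      pose proof (Cmod_ge_0 (g x)). replace (2 * (Cmod (eigval nu Om x) * Cmod (g x))) with (Cmod (g x) * (2 * Cmod (eigval nu Om x))) by ring.
      apply Rmult_le_compat_l; auto.
    + unfold g. rewrite (proj2 (invalid_zero n Om nu s f Hf x Hv)), Cmod_0. rewrite !Rmult_0_l, !Rmult_0_r. lra.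
  - intros G0 ND0' Hd0. rewrite lsum_scal. pose proof (HT G0 ND0' Hd0). lra.
  - unfold e1. assert (eps / (2 * (N + 1)) * N < eps / 2).
    { apply Rmult_lt_reg_r with (2 * (N+1)); [lra|].
      replace (eps / (2 * (N + 1)) * N * (2 * (N + 1))) with (eps * N) by (field; lra). nra. }
    fold N. lra.
Qed.
End P2.

Lemma fsum_eq (nu : nat -> C) Om s (f : coef) (F : list idx) j : NoDup F ->
  fsum F (fun i => fun j => Cmult (proj i f j) (Cinv (Cminus s (eigval nu Om i)))) j =
  if in_dec idx_eq_dec j F then gres nu Om s f j else RtoC 0.
Proof.
  induction F as [|a F IH]; intros ND; simpl; auto.
  inversion ND; subst. rewrite IH by auto. unfold proj.
  destruct (idx_eq_dec j a) as [->|Hne].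
  - destruct (in_dec idx_eq_dec a F); [contradiction|]. destruct (idx_eq_dec a a); [|congruence].
    rewrite Cplus_0_r. reflexivity.
  - rewrite Cmult_0_l, Cplus_0_l. destruct (in_dec idx_eq_dec j F); destruct (idx_eq_dec a j); try congruence; auto.
Qed.

Lemma series_g n Om (nu : nat -> C) s f :
  (forall j, (j < n - 1)%nat -> Re (nu j) < 0) -> 0 < Re s -> in_S n f ->
  series_conv (fun i => fun j => Cmult (proj i f j) (Cinv (Cminus s (eigval nu Om i)))) (gres nu Om s f).
Proof.
  intros Hnu Hs Hf eps He.
  destruct (g_in_S n Om nu s f Hnu Hs Hf) as [_ [B HB]].
  destruct (tail_lemma (wsq (gres nu Om s f)) (wsq_nonneg _) ltac:(exists B; auto) eps He) as [F0 [ND0 HT]].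
  exists F0. intros F NDF Hincl G NDG.
  eapply Rle_trans. apply (split_bound G F _ (wsq (gres nu Om s f)) 0 eps NDG ltac:(lra)).
  - intros x Hx. unfold wsq, csub. rewrite fsum_eq by auto.
    destruct (in_dec idx_eq_dec x F); [|contradiction]. unfold Cminus. rewrite Cplus_opp_r, Cmod_0. simpl. lra.
  - intros x Hx. unfold wsq, csub. rewrite fsum_eq by auto.
    destruct (in_dec idx_eq_dec x F); [contradiction|]. unfold Cminus. rewrite Copp_0, Cplus_0_r. lra.
  - intros G0 ND Hd. apply HT; auto. intros x Hx Hx0. apply (Hd x Hx). apply Hincl; auto.
  - lra.
Qed.

Lemma gen_coord n (nu : nat -> C) Om h Lh i : gen n nu Om h Lh -> Lh i = Cmult (eigval nu Om i) (h i).
Proof.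
  intros [_ [_ G]]. set (l := eigval nu Om i).
  destruct (classic (Lh i = Cmult l (h i))) as [E|Hne]; auto. exfalso.
  set (e0 := Cmod (Cminus (Cmult l (h i)) (Lh i))).
  assert (He0 : 0 < e0). { unfold e0. apply Cmod_gt_0. intro E. apply Hne.
    assert (Cmult l (h i) = Cplus (Cminus (Cmult l (h i)) (Lh i)) (Lh i)) by ceq. rewrite H, E. ceq. }
  destruct (G ((e0/2)^2) ltac:(nra)) as [d1 [Hd1 D1]].
  set (eta := e0 / (2 * (Cmod (h i) + 1))). pose proof (Cmod_ge_0 (h i)).
  assert (Heta : 0 < eta) by (unfold eta; apply Rdiv_lt_0_compat; lra).
  destruct (q_lim l eta Heta) as [d2 [Hd2 D2]].
  set (t := Rmin d1 d2 / 2). assert (Ht1 : 0 < t < d1) by (unfold t; pose proof (Rmin_l d1 d2); pose proof (Rmin_glb_lt _ _ _ Hd1 Hd2); lra).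
  assert (Ht2 : 0 < t < d2) by (unfold t; pose proof (Rmin_r d1 d2); pose proof (Rmin_glb_lt _ _ _ Hd1 Hd2); lra).
  specialize (D1 t Ht1). specialize (D2 t Ht2). apply (small_single _ _ i) in D1.
  unfold wsq in D1. unfold Ut in D1. cbv beta in D1. fold l in D1.
  set (D := Cminus (Cmult (Cminus (Cmult (h i) (cexp (Cmult l (RtoC t)))) (h i)) (RtoC (/ t))) (Lh i)) in *.
  assert (HD : D = Cplus (Cminus (Cmult l (h i)) (Lh i)) (Cmult (h i) (Cminus (q l t) l))).
  { unfold D, q. set (e := cexp _). ceq. }
  pose proof (kweight_ge1 (fst i)). apply le_INR in H0. simpl in H0.
  pose proof (Cmod_ge_0 D).
  assert (Cmod D <= e0 / 2). { assert (Cmod D ^ 2 <= (e0/2)^2).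
    { eapply Rle_trans; [|exact D1]. rewrite <- (Rmult_1_l (Cmod D ^ 2)) at 1. apply Rmult_le_compat_r; auto. apply pow2_ge_0. }
    nra. }
  assert (Cmod (Cmult (h i) (Cminus (q l t) l)) < e0 / 2).
  { rewrite Cmod_mult. fold q in D2. unfold q in D2.
    assert (Cmod (h i) * Cmod (Cminus (q l t) l) <= Cmod (h i) * eta).
    { apply Rmult_le_compat_l; auto. left. exact D2. }
    assert (Cmod (h i) * eta < e0 / 2).
    { unfold eta. apply Rmult_lt_reg_r with (2 * (Cmod (h i) + 1)); [lra|].
      replace (Cmod (h i) * (e0 / (2 * (Cmod (h i) + 1))) * (2 * (Cmod (h i) + 1))) with (Cmod (h i) * e0) by (field; lra).
      nra. }
    lra. }
  assert (e0 <= Cmod D + Cmod (Cmult (h i) (Cminus (q l t) l))).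
  { unfold e0. replace (Cminus (Cmult l (h i)) (Lh i)) with (Cplus D (Copp (Cmult (h i) (Cminus (q l t) l)))).
    eapply Rle_trans. apply Cmod_triangle. rewrite Cmod_opp. lra. rewrite HD. ceq. }
  lra.
Qed.

Lemma resolvent_g n Om (nu : nat -> C) s f :
  (forall j, (j < n - 1)%nat -> Re (nu j) < 0) -> 0 < Re s -> in_S n f ->
  resolvent_value n nu Om s f (gres nu Om s f).
Proof.
  intros Hnu Hs Hf. split.
  - exists (Lg Om nu s f). split. apply gen_g; auto.
    intros i. unfold Lg. destruct (classic (valid_idx n i)) as [Hv|Hv].
    + assert (Hd : Cminus s (eigval nu Om i) <> RtoC 0).
      { intro E. pose proof (sub_lower s (eigval nu Om i) Hs (Re_eigval n Om nu i Hnu Hv)). rewrite E, Cmod_0 in H. lra. }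
      unfold gres. set (d := Cminus s (eigval nu Om i)) in *.
      transitivity (Cmult (f i) (Cmult d (Cinv d))). unfold d. set (w := Cinv _). ceq.
      rewrite Cinv_r by auto. apply Cmult_1_r.
    + destruct (invalid_zero n Om nu s f Hf i Hv) as [E1 E2]. rewrite E1, E2. ceq.
  - intros h Lh Hg Heq. apply functional_extensionality. intros i.
    pose proof (gen_coord n nu Om h Lh i Hg) as E. specialize (Heq i). rewrite E in Heq.
    destruct (classic (valid_idx n i)) as [Hv|Hv].
    + assert (Hd : Cminus s (eigval nu Om i) <> RtoC 0).
      { intro E'. pose proof (sub_lower s (eigval nu Om i) Hs (Re_eigval n Om nu i Hnu Hv)). rewrite E', Cmod_0 in H. lra. }
      unfold gres. rewrite <- Heq. set (d := Cminus s (eigval nu Om i)) in *.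
      transitivity (Cmult (h i) (Cmult d (Cinv d))). rewrite Cinv_r by auto. symmetry; apply Cmult_1_r.
      unfold d. set (w := Cinv _). ceq.
    + destruct Hg as [[Hh _] _]. rewrite (Hh i Hv). symmetry. apply (invalid_zero n Om nu s f Hf i Hv).
Qed.

Lemma rint_helper (d w : C) T :
  (RInt (fun t => Re (Cmult (Cmult d w) (cexp (Cmult w (RtoC t))))) 0 T,
   RInt (fun t => Im (Cmult (Cmult d w) (cexp (Cmult w (RtoC t))))) 0 T)
  = Cmult d (Cminus (cexp (Cmult w (RtoC T))) (RtoC 1)).
Proof.
  destruct d as [d1 d2], w as [a b].
  assert (E1 : (fun t => Re (Cmult (Cmult (d1, d2) (a, b)) (cexp (Cmult (a, b) (RtoC t))))) =
    (fun t => exp (a*t) * ((a*d1 - b*d2) * cos (b*t) - (b*d1 + a*d2) * sin (b*t)))).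
  { apply functional_extensionality; intros t. rewrite Cmult_RtoC. unfold cexp, Cmult, Re, Im; simpl. ring. }
  assert (E2 : (fun t => Im (Cmult (Cmult (d1, d2) (a, b)) (cexp (Cmult (a, b) (RtoC t))))) =
    (fun t => exp (a*t) * ((a*d1 - b*d2) * sin (b*t) + (b*d1 + a*d2) * cos (b*t)))).
  { apply functional_extensionality; intros t. rewrite Cmult_RtoC. unfold cexp, Cmult, Re, Im; simpl. ring. }
  rewrite E1, E2.
  assert (I1 : is_RInt (fun t => exp (a*t) * ((a*d1 - b*d2) * cos (b*t) - (b*d1 + a*d2) * sin (b*t))) 0 T
     (minus (exp (a*T) * (d1 * cos (b*T) - d2 * sin (b*T))) (exp (a*0) * (d1 * cos (b*0) - d2 * sin (b*0))))).
  { apply (is_RInt_derive (fun t => exp (a*t) * (d1 * cos (b*t) - d2 * sin (b*t)))).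
    - intros x _. auto_derive; auto. ring.
    - intros x _. apply (ex_derive_continuous (K := R_AbsRing) (V := R_NormedModule)). auto_derive; auto. }
  assert (I2 : is_RInt (fun t => exp (a*t) * ((a*d1 - b*d2) * sin (b*t) + (b*d1 + a*d2) * cos (b*t))) 0 T
     (minus (exp (a*T) * (d1 * sin (b*T) + d2 * cos (b*T))) (exp (a*0) * (d1 * sin (b*0) + d2 * cos (b*0))))).
  { apply (is_RInt_derive (fun t => exp (a*t) * (d1 * sin (b*t) + d2 * cos (b*t)))).
    - intros x _. auto_derive; auto. ring.
    - intros x _. apply (ex_derive_continuous (K := R_AbsRing) (V := R_NormedModule)). auto_derive; auto. }
  rewrite (is_RInt_unique _ _ _ _ I1), (is_RInt_unique _ _ _ _ I2).
  rewrite Cmult_RtoC. unfold minus, plus, opp; simpl. rewrite !Rmult_0_r, exp_0, cos_0, sin_0.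
  unfold cexp, Cmult, Cminus, Cplus, Copp, RtoC, Re, Im; simpl.
  apply injective_projections; simpl; ring.
Qed.

Lemma laplace_formula (nu : nat -> C) Om s (f : coef) T i d :
  f i = Cmult d (Cminus (eigval nu Om i) s) ->
  laplaceT nu Om s f T i = Cmult d (Cminus (cexp (Cmult (Cminus (eigval nu Om i) s) (RtoC T))) (RtoC 1)).
Proof.
  intros Hd. set (w := Cminus (eigval nu Om i) s) in *.
  assert (Hh : forall t, Cmult (cexp (Copp (Cmult s (RtoC t)))) (Ut nu Om t f i) = Cmult (Cmult d w) (cexp (Cmult w (RtoC t)))).
  { intros t. unfold Ut. rewrite Hd.
    replace (Cmult w (RtoC t)) with (Cplus (Cmult (eigval nu Om i) (RtoC t)) (Copp (Cmult s (RtoC t)))) by (unfold w; ceq).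
    rewrite cexp_add. set (e1 := cexp _). set (e2 := cexp _). ceq. }
  unfold laplaceT. rewrite <- (rint_helper d w T). f_equal; apply RInt_ext; intros t _; rewrite Hh; reflexivity.
Qed.

Lemma exp_neg_bound y : 0 <= y -> exp (- y) <= / (1 + y).
Proof. intros Hy. rewrite exp_Ropp. apply Rinv_le_contravar. lra. apply exp_ineq1_le. Qed.

Lemma laplace_conv n Om (nu : nat -> C) s f :
  (forall j, (j < n - 1)%nat -> Re (nu j) < 0) -> 0 < Re s -> in_S n f ->
  laplace_converges n nu Om s f.
Proof.
  intros Hnu Hs Hf. exists (gres nu Om s f). split. apply g_in_S; auto.
  intros eps He. destruct (g_in_S n Om nu s f Hnu Hs Hf) as [_ [B HB]].
  pose proof (small_nonneg _ _ HB) as HB0.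
  exists (B / (2 * Re s * eps)). intros T HT.
  assert (HT0 : 0 <= T). { eapply Rle_trans; [|exact HT]. apply Rmult_le_pos; auto. left; apply Rinv_0_lt_compat. nra. }
  set (K := exp (- (Re s * T))).
  assert (HK : 0 <= K) by (left; apply exp_pos).
  assert (Hbound : forall i, Cmod (csub (laplaceT nu Om s f T) (gres nu Om s f) i) <= K * Cmod (gres nu Om s f i)).
  { intros i. unfold csub. destruct (classic (valid_idx n i)) as [Hv|Hv].
    - set (l := eigval nu Om i).
      assert (Hd : Cminus s l <> RtoC 0).
      { intro E'. pose proof (sub_lower s l Hs (Re_eigval n Om nu i Hnu Hv)). rewrite E', Cmod_0 in H. lra. }
      rewrite (laplace_formula nu Om s f T i (Copp (gres nu Om s f i))).
      + set (E := cexp _). replace (Cminus (Cmult (Copp (gres nu Om s f i)) (Cminus E (RtoC 1))) (gres nu Om s f i))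
          with (Copp (Cmult (gres nu Om s f i) E)) by ceq.
        rewrite Cmod_opp, Cmod_mult, Rmult_comm. apply Rmult_le_compat_r. apply Cmod_ge_0.
        unfold E. rewrite Cmod_cexp, re_scal_r. unfold K.
        pose proof (Re_eigval n Om nu i Hnu Hv). fold l in H.
        assert (Re (Cminus l s) = Re l - Re s) by (unfold Re, Cminus, Cplus, Copp; simpl; ring).
        assert (Re (Cminus l s) * T <= - (Re s * T)) by (rewrite H0; nra).
        destruct H1 as [H1|H1]; [left; apply exp_increasing; exact H1 | right; f_equal; exact H1].
      + unfold gres. fold l. transitivity (Cmult (f i) (Cmult (Cinv (Cminus s l)) (Cminus s l))).
        rewrite Cinv_l by auto. symmetry; apply Cmult_1_r. set (u := Cinv _). ceq.
    - destruct (invalid_zero n Om nu s f Hf i Hv) as [E1 E2].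
      rewrite (laplace_formula nu Om s f T i (RtoC 0)). rewrite E2, Cmult_0_l. unfold Cminus. rewrite Copp_0, Cplus_0_r, Cmod_0.
      rewrite Rmult_0_r. lra. rewrite E1. symmetry. apply Cmult_0_l. }
  intros G NDG. eapply Rle_trans. apply lsum_le. intros x _. apply (wsq_bound _ _ x K HK (Hbound x)).
  rewrite lsum_scal. eapply Rle_trans. apply Rmult_le_compat_l. apply pow2_ge_0. apply HB; auto.
  assert (K ^ 2 <= / (1 + 2 * Re s * T)).
  { unfold K. simpl. rewrite Rmult_1_r, <- exp_plus.
    replace (- (Re s * T) + - (Re s * T)) with (- (2 * Re s * T)) by ring. apply exp_neg_bound. nra. }
  assert (B <= eps * (1 + 2 * Re s * T)).
  { assert (B <= eps * (2 * Re s * T)).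
    { apply (Rmult_le_compat_l (2 * Re s * eps)) in HT; [|nra].
      replace (2 * Re s * eps * (B / (2 * Re s * eps))) with B in HT by (field; lra). nra. }
    nra. }
  assert (0 < 1 + 2 * Re s * T) by nra.
  apply Rle_trans with (/ (1 + 2 * Re s * T) * B). apply Rmult_le_compat_r; auto.
  apply Rmult_le_reg_l with (1 + 2 * Re s * T); auto. rewrite <- Rmult_assoc, Rinv_r by lra. lra.
Qed.

Lemma exists_h (w : C) : w <> RtoC 0 -> 0 <= Re w -> exists h, 0 < h /\ cexp (Cmult w (RtoC h)) <> RtoC 1.
Proof.
  destruct w as [a b]. intros Hw Ha. unfold Re in Ha; simpl in Ha.
  destruct (Req_dec b 0) as [Hb|Hb].
  - subst. assert (a <> 0). { intro; subst; apply Hw; reflexivity. }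
    exists 1. split; [lra|]. rewrite Cmult_RtoC. unfold cexp, Re, Im, RtoC; simpl. intro E.
    injection E; intros _ E1. rewrite Rmult_0_l, cos_0, Rmult_1_r, Rmult_1_r in E1.
    assert (exp 0 < exp a) by (apply exp_increasing; lra). rewrite exp_0 in H0. lra.
  - exists (PI / Rabs b). assert (Hpb : 0 < PI / Rabs b) by (apply Rdiv_lt_0_compat; [apply PI_RGT_0 | apply Rabs_pos_lt; auto]).
    split; auto. rewrite Cmult_RtoC. unfold cexp, Re, Im, RtoC; simpl. intro E.
    injection E; intros _ E1.
    assert (cos (b * (PI / Rabs b)) = -1).
    { unfold Rabs. destruct (Rcase_abs b).
      - replace (b * (PI / - b)) with (- PI) by (field; lra). rewrite cos_neg. apply cos_PI.
      - replace (b * (PI / b)) with PI by (field; lra). apply cos_PI. }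
    rewrite H in E1. pose proof (exp_pos (a * (PI / Rabs b))). lra.
Qed.

Lemma ksum_repeat0 (nu : nat -> C) k j : ksum nu (repeat 0%nat k) j = RtoC 0.
Proof. revert j; induction k; intros j; simpl; auto. rewrite IHk. ceq. Qed.

Lemma kweight_repeat0 k : kweight (repeat 0%nat k) = 1%nat.
Proof. induction k; simpl; auto. rewrite IHk. reflexivity. Qed.

Lemma laplace_converse n Om (nu : nat -> C) s : 0 < Om ->
  (forall f : coef, in_S n f -> laplace_converges n nu Om s f) -> 0 < Re s.
Proof.
  intros HOm Hall. destruct (Rlt_le_dec 0 (Re s)) as [H|Hs]; auto. exfalso.
  set (m0 := if Req_EM_T (Re s) 0 then if Req_EM_T (Im s) 0 then 1%Z else 0%Z else 0%Z).
  set (i0 := (repeat 0%nat (n - 1), m0) : idx).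
  set (f := fun j => if idx_eq_dec j i0 then RtoC 1 else RtoC 0 : C).
  assert (Hl0 : eigval nu Om i0 = (0, IZR m0 * Om)).
  { unfold eigval, i0; simpl fst; simpl snd. rewrite ksum_repeat0. ceq. }
  set (w := Cminus (eigval nu Om i0) s).
  assert (Hw : w <> RtoC 0).
  { unfold w. rewrite Hl0. intro E. unfold Cminus, Cplus, Copp, RtoC in E. injection E. intros E2 E1.
    unfold m0 in *. destruct s as [s1 s2]; unfold Re, Im in *; simpl in *.
    destruct (Req_EM_T s1 0); [destruct (Req_EM_T s2 0)|]; simpl in *.
    - subst. nra.
    - lra.
    - lra. }
  assert (HRw : 0 <= Re w). { unfold w. rewrite Hl0. unfold Re, Cminus, Cplus, Copp in *; simpl in *. lra. }
  assert (Hfi : in_S n f).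
  { split.
    - intros j Hj. unfold f. destruct (idx_eq_dec j i0); auto. exfalso. apply Hj. subst. unfold valid_idx, i0; simpl. apply repeat_length.
    - exists (wsq f i0 * INR 1 + 0). intros G NDG. apply (split_bound G (i0 :: nil) (wsq f) (fun _ => 0)); auto.
      + apply wsq_nonneg.
      + intros x [<-|[]]. lra.
      + intros x Hx. unfold wsq, f. destruct (idx_eq_dec x i0). subst; exfalso; apply Hx; left; auto.
        rewrite Cmod_0. simpl. lra.
      + intros G0 _ _. clear. induction G0; simpl; lra. }
  destruct (Hall f Hfi) as [g [_ Hg]].
  set (d := Cinv w).
  assert (Hfd : f i0 = Cmult d w). { unfold f, d. destruct (idx_eq_dec i0 i0); [|congruence]. rewrite Cinv_l; auto. }
  assert (HL : forall T, laplaceT nu Om s f T i0 = Cmult d (Cminus (cexp (Cmult w (RtoC T))) (RtoC 1))).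
  { intros T. apply laplace_formula. exact Hfd. }
  destruct (exists_h w Hw HRw) as [h [Hh Hne]].
  set (delta := Cmod (Cmult d (Cminus (cexp (Cmult w (RtoC h))) (RtoC 1)))).
  assert (Hdelta : 0 < delta).
  { unfold delta. apply Cmod_gt_0. apply Cmult_neq_0.
    - unfold d. intro E. pose proof (Cinv_l w Hw). rewrite E, Cmult_0_l in H.
      unfold RtoC in H. injection H. lra.
    - intro E. apply Hne. replace (cexp (Cmult w (RtoC h))) with (Cplus (Cminus (cexp (Cmult w (RtoC h))) (RtoC 1)) (RtoC 1)) by ceq.
      rewrite E. ceq. }
  destruct (Hg ((delta/4)^2) ltac:(nra)) as [T0 HT0].
  set (T1 := Rmax T0 0).
  assert (Hc : forall T, T0 <= T -> Cmod (Cminus (laplaceT nu Om s f T i0) (g i0)) <= delta / 4).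
  { intros T HT. specialize (HT0 T HT). apply (small_single _ _ i0) in HT0. unfold wsq, csub in HT0.
    pose proof (kweight_ge1 (fst i0)). apply le_INR in H. simpl in H.
    pose proof (Cmod_ge_0 (Cminus (laplaceT nu Om s f T i0) (g i0))).
    set (c := Cmod (Cminus (laplaceT nu Om s f T i0) (g i0))) in *.
    assert (c ^ 2 <= (delta/4)^2). { eapply Rle_trans; [|exact HT0]. rewrite <- (Rmult_1_l (c ^ 2)) at 1. apply Rmult_le_compat_r; auto. apply pow2_ge_0. }
    nra. }
  pose proof (Hc T1 (Rmax_l T0 0)) as C1. pose proof (Hc (T1 + h) ltac:(pose proof (Rmax_l T0 0); unfold T1; lra)) as C2.
  assert (Cmod (Cminus (laplaceT nu Om s f (T1 + h) i0) (laplaceT nu Om s f T1 i0)) <= delta / 2).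
  { replace (Cminus (laplaceT nu Om s f (T1 + h) i0) (laplaceT nu Om s f T1 i0)) with
      (Cplus (Cminus (laplaceT nu Om s f (T1 + h) i0) (g i0)) (Copp (Cminus (laplaceT nu Om s f T1 i0) (g i0)))) by ceq.
    eapply Rle_trans. apply Cmod_triangle. rewrite Cmod_opp. lra. }
  rewrite !HL in H.
  replace (Cminus (Cmult d (Cminus (cexp (Cmult w (RtoC (T1 + h)))) (RtoC 1))) (Cmult d (Cminus (cexp (Cmult w (RtoC T1))) (RtoC 1))))
    with (Cmult (cexp (Cmult w (RtoC T1))) (Cmult d (Cminus (cexp (Cmult w (RtoC h))) (RtoC 1)))) in H.
  2: { replace (Cmult w (RtoC (T1 + h))) with (Cplus (Cmult w (RtoC T1)) (Cmult w (RtoC h))) by ceq.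
       rewrite cexp_add. set (e1 := cexp _). set (e2 := cexp _). ceq. }
  rewrite Cmod_mult, Cmod_cexp, re_scal_r in H. fold delta in H.
  assert (1 <= exp (Re w * T1)). { rewrite <- exp_0. assert (0 <= Re w * T1) by (apply Rmult_le_pos; auto; apply Rmax_r).
    destruct H0. left; apply exp_increasing; auto. rewrite H0; lra. }
  nra.
Qed.

Theorem theorem3 (n : nat) (Om : R) (nu : nat -> C) :
  (2 <= n)%nat ->
  0 < Om ->
  (forall j, (j < n - 1)%nat -> Re (nu j) < 0) ->
  (forall j1 j2, (j1 < n - 1)%nat -> (j2 < n - 1)%nat -> j1 <> j2 ->
     mu Om nu j1 <> mu Om nu j2) ->
  (forall j, (S j < n - 1)%nat -> Cmod (mu Om nu (S j)) <= Cmod (mu Om nu j)) ->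
  Cmod (mu Om nu 0) < 1 ->
  (forall (s : C) (f : coef), 0 < Re s -> in_S n f ->
     exists g : coef,
       series_conv
         (fun i => fun j => Cmult (proj i f j) (Cinv (Cminus s (eigval nu Om i)))) g
       /\ resolvent_value n nu Om s f g)
  /\
  (forall s : C, (forall f : coef, in_S n f -> laplace_converges n nu Om s f) <-> 0 < Re s).
Proof.
  intros Hn HOm Hnu _ _ _. split.
  - intros s f Hs Hf. exists (gres nu Om s f). split.
    + apply (series_g n); auto.
    + apply (resolvent_g n); auto.
  - intros s. split.
    + apply laplace_converse; auto.
    + intros Hs f Hf. apply (laplace_conv n); auto.
Qed.
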